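(* Let $H \in \mathcal{M}_n(\mathbb{C})$ be a positive semidefinite matrix whose least eigenvalue is simple. Then $H$ has exactly $k$ distinct eigenvalues, where $2 \le k \le n$, if and only if there are $k$ distinct real numbers $\mu_1, \ldots, \mu_k$ such that (i) $H - \mu_i I$ is a singular matrix for every $1 \le i \le k-1$; and (ii) $\prod_{i=1}^{k-1}(H - \mu_i I) = \frac{\prod_{i=1}^{k-1}(\mu_k - \mu_i)}{\|\alpha\|_2^2}\,\alpha\alpha^\ast$ and $H\alpha = \mu_k\alpha$ for some $\alpha \in \mathbb{C}^n\setminus\{\mathbf{0}\}$. Moreover, in this case $\mu_1, \ldots, \mu_k$ are exactly the $k$ distinct eigenvalues of $H$.
   Context: $\mathcal{M}_n(\mathbb{C})$ is the set of $n\times n$ complex matrices, $I$ the identity matrix, $\alpha^\ast = \overline{\alpha}^T$ and $\|\alpha\|_2^2 = \alpha^\ast\alpha$. A simple eigenvalue is one of algebraic multiplicity $1$. *)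

(* Defs.v *)
From HB Require Import structures.
From mathcomp Require Import all_boot all_order all_algebra.
Set Implicit Arguments. Unset Strict Implicit. Unset Printing Implicit Defensive.
Import Order.TTheory GRing.Theory Num.Theory.
Local Open Scope ring_scope.

(* The complex field is an arbitrary numClosedFieldType C
   (e.g. algC, or R[i] for R : realType); conjugation is Num.conj. *)

Definition ctrmx (C : numClosedFieldType) m n (A : 'M[C]_(m, n)) : 'M[C]_(n, m) :=
  (map_mx Num.conj A)^T.

Definition hermitianmx (C : numClosedFieldType) n (H : 'M[C]_n) : Prop :=
  ctrmx H = H.

Definition psdmx (C : numClosedFieldType) n (H : 'M[C]_n) : Prop :=
  hermitianmx H /\ forall x : 'cV[C]_n, 0 <= (ctrmx x *m H *m x) ord0 ord0.

Definition sqnorm2 (C : numClosedFieldType) n (a : 'cV[C]_n) : C :=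
  (ctrmx a *m a) ord0 ord0.

(* the least eigenvalue of H exists and is simple
   (algebraic multiplicity 1 = multiplicity as a root of char_poly) *)
Definition least_eig_simple (C : numClosedFieldType) n (H : 'M[C]_n) : Prop :=
  exists lam : C, [/\ eigenvalue H lam,
                      (forall mu, eigenvalue H mu -> lam <= mu) &
                      mup lam (char_poly H) = 1%N].

Definition num_distinct_eigs (C : numClosedFieldType) n (H : 'M[C]_n) (k : nat) : Prop :=
  exists s : seq C, [/\ uniq s, size s = k & forall x, eigenvalue H x <-> x \in s].

(* Main.v *)
Require Import Defs.
From HB Require Import structures.
From mathcomp Require Import all_boot all_order all_algebra.
From mathcomp Require Import sesquilinear spectral zify.
Import Order.TTheory GRing.Theory Num.Theory.
Local Open Scope ring_scope.
Lemma ctrmx_tC (C : numClosedFieldType) m n (A : 'M[C]_(m, n)) :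
  ctrmx A = (A ^t* )%sesqui.
Proof. by rewrite /ctrmx map_trmx. Qed.

Lemma spec_dec (C : numClosedFieldType) n (H : 'M[C]_n) : ctrmx H = H ->
  exists (P : 'M[C]_n) (d : 'rV[C]_n),
    [/\ P *m ctrmx P = 1%:M, ctrmx P *m P = 1%:M,
        H = ctrmx P *m diag_mx d *m P & forall j, d 0 j \is Num.real].
Proof.
move=> hH.
have herm : H \is hermsymmx.
  by apply/is_hermitianmxP; rewrite expr0 scale1r -ctrmx_tC hH.
have /orthomx_spectralP HE := hermitian_normalmx herm.
have Pu := spectral_unitarymx H.
exists (spectralmx H), (spectral_diag H); split.
- by rewrite ctrmx_tC; apply/unitarymxP.
- by rewrite ctrmx_tC -invmx_unitary // mulVmx // spectral_unit.
- by rewrite ctrmx_tC -invmx_unitary.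
- by move=> j; have /mxOverP := hermitian_spectral_diag_real herm; apply.
Qed.

Lemma eigE (C : numClosedFieldType) n (g : 'M[C]_n) a :
  eigenvalue g a = (\det (g - a%:M) == 0).
Proof.
by rewrite /eigenvalue /eigenspace kermx_eq0 row_free_unit unitmxE unitfE negbK.
Qed.
Lemma prod_diag (C : numClosedFieldType) n (P Q : 'M[C]_n)
  (PQ : P *m Q = 1%:M) (QP : Q *m P = 1%:M) (d : 'rV[C]_n) (a : nat -> C) m :
 \prod_(0 <= i < m) (Q *m diag_mx d *m P - (a i)%:M) =
   Q *m diag_mx (\row_j \prod_(0 <= i < m) (d 0 j - a i)) *m P.
Proof.
elim: m => [|m IH].
  rewrite big_geq // (_ : \row_j _ = const_mx 1); last by apply/rowP=> j; rewrite !mxE big_geq.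
  by rewrite diag_const_mx mul_mx_scalar scale1r QP.
rewrite (@big_nat_recr _ 1 *%R) //= IH -mulmxE.
have -> : Q *m diag_mx d *m P - (a m)%:M = Q *m diag_mx (d - const_mx (a m)) *m P.
  by rewrite linearB /= diag_const_mx mulmxBr mulmxBl mul_mx_scalar -scalemxAl QP scalemx1.
rewrite !mulmxA -[Q *m _ *m P *m Q]mulmxA PQ mulmx1 -[Q *m _ *m diag_mx _]mulmxA mulmx_diag.
congr (Q *m diag_mx _ *m P); apply/rowP=> j; rewrite !mxE big_nat_recr //= !mxE.
Qed.
Lemma vprod (C : numClosedFieldType) n (H : 'M[C]_n) (v : 'rV[C]_n) x
  (a : nat -> C) m : v *m H = x *: v ->
  v *m \prod_(0 <= i < m) (H - (a i)%:M) = (\prod_(0 <= i < m) (x - a i)) *: v.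
Proof.
move=> vH; elim: m => [|m IH].
  by rewrite !big_geq // scale1r; rewrite -[1]/(1%:M : 'M_n) mulmx1.
rewrite (@big_nat_recr _ 1 *%R) //= big_nat_recr //= -mulmxE mulmxA IH.
by rewrite -scalemxAl mulmxBr vH mul_mx_scalar -scalerBl scalerA.
Qed.

Lemma part2 (C : numClosedFieldType) n (H : 'M[C]_n) k (mu : nat -> C) :
  (2 <= k)%N ->
  (forall i j, (i < k)%N -> (j < k)%N -> mu i = mu j -> i = j) ->
  (forall i, (i < k.-1)%N -> \det (H - (mu i)%:M) = 0) ->
  (exists alpha : 'cV[C]_n,
        [/\ alpha != 0,
            \prod_(0 <= i < k.-1) (H - (mu i)%:M)
              = ((\prod_(0 <= i < k.-1) (mu k.-1 - mu i)) / sqnorm2 alpha)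
                  *: (alpha *m ctrmx alpha) &
            H *m alpha = mu k.-1 *: alpha]) ->
  forall x, eigenvalue H x <-> exists2 i, (i < k)%N & x = mu i.
Proof.
move=> k2 inj hdet [al [al0 hprod hal]] x; split; last first.
  move=> [i ik ->]; rewrite eigE; apply/eqP.
  have [ik1|] := ltnP i k.-1; first exact: hdet.
  move=> ki; have -> : i = k.-1 by lia.
  apply/eqP/negPn/negP => hu.
  have hz : (H - (mu k.-1)%:M) *m al = 0 by rewrite mulmxBl hal mul_scalar_mx subrr.
  by move: al0; rewrite -(mulKmx (x:=H - (mu k.-1)%:M) _ al) ?unitmxE ?unitfE // hz mulmx0 eqxx.
move=> hx; have [v vH v0] := @eigenvalueP _ _ H x hx.
case: (boolP [exists i : 'I_k, x == mu i]) => [/existsP [i /eqP ->]|nex].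
  by exists i.
exfalso; move: v0; apply/negP/negPn.
have xmu : forall i, (i < k)%N -> x != mu i.
  move=> i ik; apply/negP => /eqP e; move/existsP: nex; apply; by exists (Ordinal ik); rewrite e.
have kk : (k.-1 < k)%N by lia.
have va : v *m al = 0.
  have : (x - mu k.-1) *: (v *m al) = 0.
    by rewrite scalerBl scalemxAl -vH -mulmxA hal -scalemxAr subrr.
  by move/eqP; rewrite scaler_eq0 subr_eq0 (negbTE (xmu _ kk)) /= => /eqP.
have hne : \prod_(0 <= i < k.-1) (x - mu i) != 0.
  rewrite prodf_seq_neq0; apply/allP => i.
  rewrite mem_index_iota => /andP [_ ik] /=; rewrite subr_eq0 xmu //.
  exact: ltn_trans ik kk.
have := @vprod _ _ H v x mu k.-1 vH.
rewrite hprod -scalemxAr mulmxA va mul0mx scaler0 => /esym/eqP.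
by rewrite scaler_eq0 (negbTE hne).
Qed.
Lemma eig_diag (C : numClosedFieldType) n (P Q : 'M[C]_n)
  (QP : Q *m P = 1%:M) (d : 'rV[C]_n) x :
  eigenvalue (Q *m diag_mx d *m P) x <-> exists j, d 0 j = x.
Proof.
rewrite eigE.
have -> : Q *m diag_mx d *m P - x%:M = Q *m diag_mx (d - const_mx x) *m P.
  by rewrite linearB /= diag_const_mx mulmxBr mulmxBl mul_mx_scalar -scalemxAl QP scalemx1.
rewrite !det_mulmx mulrAC -det_mulmx QP det1 mul1r det_diag.
split.
  move=> /prodf_eq0 [j _]; rewrite !mxE subr_eq0 => /eqP hj; by exists j.
move=> [j hj]; apply/prodf_eq0; exists j => //; by rewrite !mxE hj subrr.
Qed.

Lemma charp_diag (C : numClosedFieldType) n (P Q : 'M[C]_n)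
  (QP : Q *m P = 1%:M) (d : 'rV[C]_n) :
  char_poly (Q *m diag_mx d *m P) = \prod_(j < n) ('X - (d 0 j)%:P).
Proof.
have QP' : map_mx polyC Q *m map_mx polyC P = 1%:M by rewrite -map_mxM QP map_mx1.
rewrite /char_poly.
have -> : char_poly_mx (Q *m diag_mx d *m P) =
   map_mx polyC Q *m char_poly_mx (diag_mx d) *m map_mx polyC P.
  rewrite /char_poly_mx mulmxBr mulmxBl !map_mxM mul_mx_scalar -scalemxAl QP' scalemx1.
  by [].
rewrite /char_poly !det_mulmx mulrAC -det_mulmx QP' det1 mul1r.
rewrite -/(char_poly _) char_poly_trig ?diag_mx_is_trig //.
by apply: eq_bigr => j _; rewrite mxE eqxx mulr1n.
Qed.

Lemma ctrmxK (C : numClosedFieldType) m n (A : 'M[C]_(m, n)) : ctrmx (ctrmx A) = A.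
Proof. by apply/matrixP=> i j; rewrite !mxE conjCK. Qed.

Lemma ctrmx_col (C : numClosedFieldType) m n (A : 'M[C]_(m, n)) j :
  ctrmx (col j A) = row j (ctrmx A).
Proof. by apply/matrixP=> i l; rewrite !mxE. Qed.

Lemma part1_fwd (C : numClosedFieldType) (n : nat) (H : 'M[C]_n)
    (HH : psdmx H) (Hleast : least_eig_simple H) (k : nat)
    (Hk : (2 <= k <= n)%N) :
  num_distinct_eigs H k ->
   exists mu : nat -> C,
     [/\ (forall i, (i < k)%N -> mu i \is Num.real),
         (forall i j, (i < k)%N -> (j < k)%N -> mu i = mu j -> i = j),
         (forall i, (i < k.-1)%N -> \det (H - (mu i)%:M) = 0) &
         exists alpha : 'cV[C]_n,
           [/\ alpha != 0,
               \prod_(0 <= i < k.-1) (H - (mu i)%:M)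
                 = ((\prod_(0 <= i < k.-1) (mu k.-1 - mu i)) / sqnorm2 alpha)
                     *: (alpha *m ctrmx alpha) &
               H *m alpha = mu k.-1 *: alpha]].
Proof.
move=> [s [us sk hs]].
have [P [d [PQ QP HE dreal]]] := @spec_dec _ _ H (proj1 HH).
set Q := ctrmx P in PQ QP HE.
have eigd : forall x, eigenvalue H x <-> exists j, d 0 j = x.
  by move=> x; rewrite HE; apply: eig_diag.
have [lam [lame _ lamm]] := Hleast.
have [j0 dj0] := (eigd lam).1 lame.
have uniqj : forall j, d 0 j = lam -> j = j0.
  move=> j dj; apply/eqP/negPn/negP => jj0.
  have cnz : char_poly H != 0 by apply: monic_neq0; apply: char_poly_monic.
  have := mup_geq lam 2 cnz; rewrite lamm /=.
  have -> : char_poly H = ('X - lam%:P) ^+ 2 * \prod_(l < n | (l != j0) && (l != j)) ('X - (d 0 l)%:P).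
    rewrite HE charp_diag // (bigD1 j0) //= (bigD1 j) //= dj0 dj mulrA expr2.
    by congr (_ * _); apply: eq_bigl => l; rewrite andbT andbC.
  by rewrite dvdp_mulIl.
have lams : lam \in s by apply/hs.
set s' := rem lam s.
have us' : uniq s' := rem_uniq lam us.
have ss' : size s' = k.-1 by rewrite size_rem // sk.
have ms' : forall y, (y \in s') = (y != lam) && (y \in s).
  by move=> y; rewrite (mem_rem_uniq lam us) inE.
pose mu := fun i => if (i < k.-1)%N then nth 0 s' i else lam.
have mus : forall i, (i < k)%N -> eigenvalue H (mu i).
  move=> i ik; rewrite /mu; case: ifP => ik1 //.
  apply/hs; have : nth 0 s' i \in s' by apply: mem_nth; rewrite ss'.
  by rewrite ms' => /andP[].
have muk : mu k.-1 = lam by rewrite /mu ltnn.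
exists mu; split.
- move=> i ik; have [j <-] := (eigd _).1 (mus i ik); exact: dreal.
- move=> i j ik jk; rewrite /mu; case: ifP => ik1; case: ifP => jk1.
  + by move/eqP; rewrite nth_uniq ?ss' // => /eqP.
  + move=> e; have : nth 0 s' i \in s' by apply: mem_nth; rewrite ss'.
    by rewrite e ms' eqxx.
  + move=> e; have : nth 0 s' j \in s' by apply: mem_nth; rewrite ss'.
    by rewrite -e ms' eqxx.
  + move=> _; lia.
- move=> i ik; apply/eqP; rewrite -eigE; apply: mus; lia.
have sq : sqnorm2 (col j0 Q) = 1.
  rewrite /sqnorm2 ctrmx_col ctrmxK.
  have e1 : (P *m Q) j0 j0 = 1 by rewrite PQ mxE eqxx.
  by rewrite -e1 !mxE; apply: eq_bigr => l _; rewrite !mxE.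
exists (col j0 Q); split.
- apply/eqP => a0; move: sq; rewrite a0 /sqnorm2 mulmx0 mxE => /eqP.
  by rewrite eq_sym oner_eq0.
- rewrite sq divr1 HE prod_diag // muk.
  set c := \prod_(0 <= i < k.-1) (lam - mu i).
  have hD : diag_mx (\row_j \prod_(0 <= i < k.-1) (d 0 j - mu i)) = c *: delta_mx j0 j0.
    apply/matrixP => a b; rewrite !mxE.
    case: (eqVneq a b) => [<-|ab]; last first.
      by rewrite mulr0n; case: (eqVneq a j0) => [ea|] /=; [rewrite -ea eq_sym (negbTE ab) mulr0 | rewrite mulr0].
    rewrite mulr1n; case: (eqVneq a j0) => [->|aj0] /=.
      by rewrite mulr1 dj0.
    rewrite mulr0; apply/eqP; rewrite prodf_seq_eq0; apply/hasP.
    have das : d 0 a \in s' by rewrite ms'; apply/andP; split;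
      [apply/negP => /eqP /uniqj; apply/eqP | apply/hs; apply/eigd; exists a].
    exists (index (d 0 a) s').
      by rewrite mem_index_iota /= -ss' index_mem.
    by rewrite /mu -ss' index_mem das nth_index // subrr eqxx.
  rewrite hD -scalemxAr -scalemxAl; congr (_ *: _).
  by rewrite ctrmx_col ctrmxK colE rowE mulmxA -(mulmxA Q) mul_delta_mx.
- rewrite muk colE mulmxA HE -(mulmxA _ P) PQ mulmx1 -mulmxA.
  have -> : diag_mx d *m delta_mx j0 (0 : 'I_1) = lam *: delta_mx j0 0.
    apply/matrixP => a b; rewrite mul_diag_mx !mxE.
    by case: (eqVneq a j0) => [->|]; rewrite ?dj0 ?mulr1 ?mulr0.
  by rewrite -scalemxAr.
Qed.
(* mu_1,...,mu_k of the paper are mu 0, ..., mu (k-1); mu_k = mu k.-1. *)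
Theorem lemma4p1 (C : numClosedFieldType) (n : nat) (H : 'M[C]_n)
    (HH : psdmx H) (Hleast : least_eig_simple H) (k : nat)
    (Hk : (2 <= k <= n)%N) :
  (num_distinct_eigs H k <->
   exists mu : nat -> C,
     [/\ (forall i, (i < k)%N -> mu i \is Num.real),
         (forall i j, (i < k)%N -> (j < k)%N -> mu i = mu j -> i = j),
         (forall i, (i < k.-1)%N -> \det (H - (mu i)%:M) = 0) &
         exists alpha : 'cV[C]_n,
           [/\ alpha != 0,
               \prod_(0 <= i < k.-1) (H - (mu i)%:M)
                 = ((\prod_(0 <= i < k.-1) (mu k.-1 - mu i)) / sqnorm2 alpha)
                     *: (alpha *m ctrmx alpha) &
               H *m alpha = mu k.-1 *: alpha]])
  /\
  (forall mu : nat -> C,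
     (forall i, (i < k)%N -> mu i \is Num.real) ->
     (forall i j, (i < k)%N -> (j < k)%N -> mu i = mu j -> i = j) ->
     (forall i, (i < k.-1)%N -> \det (H - (mu i)%:M) = 0) ->
     (exists alpha : 'cV[C]_n,
        [/\ alpha != 0,
            \prod_(0 <= i < k.-1) (H - (mu i)%:M)
              = ((\prod_(0 <= i < k.-1) (mu k.-1 - mu i)) / sqnorm2 alpha)
                  *: (alpha *m ctrmx alpha) &
            H *m alpha = mu k.-1 *: alpha]) ->
     forall x, eigenvalue H x <-> exists2 i, (i < k)%N & x = mu i).
Proof.
have k2 : (2 <= k)%N by case/andP: Hk.
split; last first.
  by move=> mu _ inj hdet hal; apply: part2.
split; first exact: part1_fwd.
move=> [mu [_ inj hdet hal]].
exists [seq mu i | i <- iota 0 k]; split.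
- rewrite map_inj_in_uniq ?iota_uniq // => i j; rewrite !mem_iota /= !add0n => ik jk; exact: inj.
- by rewrite size_map size_iota.
move=> x; rewrite (@part2 _ _ H k mu k2 inj hdet hal x); split.
  by move=> [i ik ->]; apply/mapP; exists i; rewrite ?mem_iota.
by move=> /mapP [i]; rewrite mem_iota => ik ->; exists i.
Qed.
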